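(* Let $G$ be a connected finite graph without a cut-vertex, let $\mathcal{L}$ be a degree-list assignment for $G$, and let $g$ be a partial proper $\mathcal{L}$-coloring of $G$. If $G$ has no proper $\mathcal{L}$-coloring $f$ with $|f^{-1}(\alpha)|\geq|g^{-1}(\alpha)|$ for all colors $\alpha$, then all the lists $\mathcal{L}(x)$, $x\in V(G)$, are equal.
   Context: A cut-vertex of a connected graph $G$ is a vertex $x$ with $G-x$ disconnected. A list assignment assigns to each vertex $x$ a set $\mathcal{L}(x)$; it is a degree-list assignment if $|\mathcal{L}(x)|\geq\deg_G(x)$ for all $x$. A (partial) $\mathcal{L}$-coloring is a function $f$ with domain $V(G)$ (resp. a subset of $V(G)$) and $f(x)\in\mathcal{L}(x)$; it is proper if adjacent vertices in its domain get different colors. *)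

(* Defs.v *)
From mathcomp Require Import all_boot.
Set Implicit Arguments. Unset Strict Implicit. Unset Printing Implicit Defensive.

(* A finite simple graph: vertex set T (finType), adjacency e : rel T,
   assumed symmetric and irreflexive (hypotheses of the theorem). *)

Definition deg (T : finType) (e : rel T) (x : T) : nat := #|[set y | e x y]|.

Definition connected_graph (T : finType) (e : rel T) : Prop :=
  forall y z : T, connect e y z.

Definition del_vertex (T : finType) (e : rel T) (x : T) : rel T :=
  [rel u v | [&& e u v, u != x & v != x]].

Definition cut_vertex (T : finType) (e : rel T) (x : T) : Prop :=
  exists y z : T, [/\ y != x, z != x & ~~ connect (del_vertex e x) y z].

Definition degree_list_assignment (T C : finType) (e : rel T)
  (L : T -> {set C}) : Prop :=
  forall x, deg e x <= #|L x|.

Definition L_coloring (T C : finType) (L : T -> {set C}) (f : T -> C) : Prop :=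
  forall x, f x \in L x.

Definition proper_coloring (T C : finType) (e : rel T) (f : T -> C) : Prop :=
  forall x y, e x y -> f x != f y.

Definition partial_L_coloring (T C : finType) (L : T -> {set C})
  (g : T -> option C) : Prop :=
  forall x c, g x = Some c -> c \in L x.

Definition proper_partial_coloring (T C : finType) (e : rel T)
  (g : T -> option C) : Prop :=
  forall x y c d, e x y -> g x = Some c -> g y = Some d -> c != d.

Definition fiber (T C : finType) (f : T -> C) (a : C) : nat := #|[set x | f x == a]|.
Definition pfiber (T C : finType) (g : T -> option C) (a : C) : nat :=
  #|[set x | g x == Some a]|.

(* Main.v *)
Require Import Defs.
From mathcomp Require Import all_boot.
From mathcomp Require Import perm.
From mathcomp Require Import zify.

Section Proof.
Variables (T C : finType) (e : rel T).
Hypothesis e_sym : symmetric e.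
Hypothesis e_irr : irreflexive e.
Variable L : T -> {set C}.
Hypothesis L_deg : degree_list_assignment e L.
Variable g : T -> option C.

Definition Nb u := [set y | e u y].
Definition ntok (h : T -> option C) := #|[set t | h t == None]|.
Definition Bad (h : T -> option C) :=
  [/\ partial_L_coloring L h, proper_partial_coloring e h &
      forall a, pfiber g a <= pfiber h a].
Definition stuck_at (h : T -> option C) u :=
  forall c, c \in L u -> exists w, e u w /\ h w = Some c.

Lemma stuck_sub h u : stuck_at h u -> Some @: L u \subset h @: Nb u.
Proof.
move=> st; apply/subsetP => o /imsetP [c cL ->].
have [w [ew hw]] := st c cL; apply/imsetP; exists w; last by rewrite hw.
by rewrite inE.
Qed.

Lemma full_img h u : Some @: L u \subset h @: Nb u -> h @: Nb u = Some @: L u.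
Proof.
move=> sub; apply/esym/eqP; rewrite eqEcard sub /=.
rewrite (card_imset _ (@Some_inj _)).
apply: leq_trans (leq_imset_card _ _) _.
exact: L_deg.
Qed.

Lemma img_minus h u z : z \in Nb u -> ~ (Some @: L u \subset h @: (Nb u :\ z)).
Proof.
move=> zN sub.
have H1 := leq_trans (subset_leq_card sub) (leq_imset_card _ _).
rewrite (card_imset _ (@Some_inj _)) in H1.
have E := cardsD1 z (Nb u); rewrite zN in E.
have H2 : #|Nb u| <= #|L u| := L_deg u.
lia.
Qed.

Lemma stuck_inj h u w b c : stuck_at h u -> e u w -> e u b -> w != b ->
  h w = Some c -> h b = Some c -> False.
Proof.
move=> st ew eb wb hw hb.
apply: (img_minus h u b); first by rewrite inE.
apply/subsetP => o oL.
have /imsetP [y yN ->] := subsetP (stuck_sub _ _ st) o oL.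
case: (eqVneq y b) => [->|yb].
  rewrite hb -hw; apply: imset_f; by rewrite !inE wb ew.
by apply: imset_f; rewrite !inE yb; rewrite inE in yN.
Qed.

Lemma stuck_col h u w c : stuck_at h u -> e u w -> h w = Some c -> c \in L u.
Proof.
move=> st ew hw.
have E := full_img _ _ (stuck_sub _ _ st).
have : h w \in h @: Nb u by apply: imset_f; rewrite inE.
by rewrite E hw => /imsetP [c' c'L [->]].
Qed.

Lemma swap_ok h u w c : Bad h -> stuck_at h u -> h u = None -> e u w ->
  h w = Some c ->
  Bad (fun t => h (perm.tperm u w t)) /\ ntok (fun t => h (perm.tperm u w t)) = ntok h.
Proof.
move=> [hcol hpr hfib] st hu euw hw.
have uw : u != w by apply/eqP => E; subst w; rewrite e_irr in euw.
set h1 := fun t => h (perm.tperm u w t).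
have h1u : h1 u = Some c by rewrite /h1 perm.tpermL.
have h1w : h1 w = None by rewrite /h1 perm.tpermR.
have h1t : forall t, t != u -> t != w -> h1 t = h t.
  by move=> t tu tw; rewrite /h1 perm.tpermD // eq_sym.
have cardE : forall P : option C -> bool,
    #|[set t | P (h1 t)]| = #|[set t | P (h t)]|.
  move=> P.
  have -> : [set t | P (h1 t)] = (perm.tperm u w) @^-1: [set t | P (h t)].
    by apply/setP => t; rewrite !inE.
  by rewrite card_preimset //; apply: perm.perm_inj.
split; last exact: cardE.
split.
- move=> t d; case: (eqVneq t u) => [->|tu].
    rewrite h1u => -[<-]; exact: (stuck_col _ _ _ _ st euw hw).
  case: (eqVneq t w) => [->|tw]; first by rewrite h1w.
  rewrite h1t //; exact: hcol.
- have key : forall a b d1 d2, e a b -> a = u -> h1 a = Some d1 -> h1 b = Some d2 -> d1 != d2.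
    move=> a b d1 d2 eab au; subst a; rewrite h1u => -[<-].
    case: (eqVneq b w) => [->|bw]; first by rewrite h1w.
    have bu : b != u by apply/eqP => E; subst b; rewrite e_irr in eab.
    rewrite h1t // => hb; apply/eqP => E; subst d2.
    by apply: (stuck_inj _ _ _ _ _ st euw eab _ hw hb); rewrite eq_sym.
  move=> a b d1 d2 eab ha hb.
  case: (eqVneq a u) => au; first exact: (key a b d1 d2).
  case: (eqVneq b u) => bu.
    rewrite eq_sym; exact: (key b a d2 d1 (etrans (e_sym b a) eab) bu hb ha).
  case: (eqVneq a w) => aw; first by move: ha; rewrite aw h1w.
  case: (eqVneq b w) => bw; first by move: hb; rewrite bw h1w.
  rewrite h1t // in ha; rewrite h1t // in hb; exact: (hpr a b).
- move=> a; rewrite /pfiber cardE; exact: hfib.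
Qed.

Lemma ext_ok h u c : Bad h -> h u = None -> c \in L u ->
  (forall w, e u w -> h w != Some c) ->
  Bad (fun t => if t == u then Some c else h t) /\
  ntok (fun t => if t == u then Some c else h t) < ntok h.
Proof.
move=> [hcol hpr hfib] hu cL nw.
set h1 := fun t => if t == u then Some c else h t.
split.
  split.
  - move=> t d; rewrite /h1; case: (eqVneq t u) => [->|tu]; first by move=> [<-].
    exact: hcol.
  - move=> a b d1 d2 eab; rewrite /h1.
    case: (eqVneq a u) => [au|au]; case: (eqVneq b u) => [bu|bu].
    + by subst; rewrite e_irr in eab.
    + subst a => -[<-] hb; apply/eqP => E; subst d2.
      by move: (nw b eab); rewrite hb eqxx.
    + subst b => ha -[<-]; apply/eqP => E; subst d1.
      by rewrite e_sym in eab; move: (nw a eab); rewrite ha eqxx.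
    + exact: hpr.
  - move=> a; apply: leq_trans (hfib a) _; apply: subset_leq_card.
    apply/subsetP => t; rewrite !inE /h1; case: (eqVneq t u) => // ->.
    by rewrite hu.
rewrite /ntok; have -> : [set t | h1 t == None] = [set t | h t == None] :\ u.
  apply/setP => t; rewrite !inE /h1; by case: (eqVneq t u).
rewrite (cardsD1 u [set t | h t == None]) inE hu eqxx.
by [].
Qed.

Hypothesis NF : ~ (exists f : T -> C, [/\ L_coloring L f, proper_coloring e f &
        forall a : C, pfiber g a <= fiber f a]).

Lemma bad_ntok h (x0 : T) : Bad h -> 0 < ntok h.
Proof.
move=> [hcol hpr hfib]; rewrite lt0n; apply/negP => /eqP H0.
have Hs := cards0_eq H0.
have all_col : forall t, h t != None.
  move=> t; apply/negP => /eqP ht.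
  have : t \in [set t | h t == None] by rewrite inE ht.
  by rewrite Hs inE.
case Hx0: (h x0) => [c0|]; last by move: (all_col x0); rewrite Hx0.
apply: NF; exists (fun t => odflt c0 (h t)); split.
- move=> t; case E: (h t) => [d|] /=; first exact: (hcol t d E).
  by move: (all_col t); rewrite E.
- move=> a b eab; case Ea: (h a) => [da|]; last by move: (all_col a); rewrite Ea.
  case Eb: (h b) => [db|]; last by move: (all_col b); rewrite Eb.
  exact: (hpr a b da db eab Ea Eb).
- move=> a; apply: leq_trans (hfib a) _; apply: subset_leq_card.
  by apply/subsetP => t; rewrite !inE => /eqP ->.
Qed.

Lemma walk (e' : rel T) (sub : forall a b, e' a b -> e a b) n
  (SA : forall h, Bad h -> ntok h = n -> forall u, h u = None -> stuck_at h u) p :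
  forall u h, path e' u p -> Bad h -> ntok h = n -> h u = None ->
  exists h', [/\ Bad h', ntok h' = n, h' (last u p) = None &
                 forall t, t \notin u :: p -> h' t = h t].
Proof.
elim: p => [|w p IH] u h.
  move=> _ bh nh hu; exists h; split => //.
move=> /= /andP [euw pp] bh nh hu.
have st := SA h bh nh u hu.
case E: (h w) => [c|].
  have [bh1 nh1] := swap_ok h u w c bh st hu (sub _ _ euw) E.
  have h1w : h (tperm u w w) = None by rewrite tpermR.
  have [h' [b' n' l' r']] := IH w _ pp bh1 (etrans nh1 nh) h1w.
  exists h'; split => // t; rewrite !in_cons !negb_or => /and3P [tu tw tp].
  rewrite r'; last by rewrite in_cons negb_or tw tp.
  by rewrite tpermD // eq_sym.
have [h' [b' n' l' r']] := IH w h pp bh nh E.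
exists h'; split => // t; rewrite !in_cons !negb_or => /and3P [tu tw tp].
by rewrite r' // in_cons negb_or tw tp.
Qed.

Lemma notin_path x z p : z != x -> path (del_vertex e x) z p -> x \notin z :: p.
Proof.
elim: p z => [|w p IH] z zx /=; first by rewrite inE eq_sym.
move=> /andP [/and3P [_ _ wx] pp].
rewrite in_cons negb_or eq_sym zx /=; exact: IH.
Qed.

Hypothesis G_conn : connected_graph e.
Hypothesis G_nocut : forall x : T, ~ cut_vertex e x.
Hypothesis g_col : partial_L_coloring L g.
Hypothesis g_proper : proper_partial_coloring e g.

Lemma core x y c : e x y -> c \in L x -> c \notin L y -> False.
Proof.
move=> exy cx cy.
suff H : forall n h, ntok h <= n -> ~ Bad h.
  by apply: (H (ntok g) g (leqnn _)); split.
elim=> [|n IH] h hn bh.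
  by have := bad_ntok h x bh; rewrite lt0n -leqn0 hn.
case: (leqP (ntok h) n) => [hle|hgt]; first exact: (IH h hle bh).
have heq : ntok h = n.+1 by apply/eqP; rewrite eqn_leq hn hgt.
clear hn hgt.
have SA : forall h, Bad h -> ntok h = n.+1 -> forall u, h u = None -> stuck_at h u.
  move=> h' bh' nh' u hu.
  case: (boolP [forall d in L u, exists w, e u w && (h' w == Some d)]) => H.
    move=> d dL; move/forall_inP: H => /(_ d dL) /existsP [w /andP [ew /eqP hw]].
    by exists w.
  exfalso; move/forall_inPn: H => [d dL] /existsPn nw.
  have nw' : forall w, e u w -> h' w != Some d.
    by move=> w ew; move: (nw w); rewrite negb_and ew.
  have [b2 n2] := ext_ok h' u d bh' hu dL nw'.
  apply: (IH _ _ b2); rewrite -ltnS -nh'; exact: n2.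
have /set0Pn [u0] : [set t | h t == None] != set0.
  by rewrite -card_gt0; apply: (bad_ntok h x bh).
rewrite inE => /eqP hu0.
have /connectP [p1 pp1 xl] := G_conn u0 x.
have [h1 [b1 n1 l1 _]] := walk e (fun a b H => H) n.+1 SA p1 u0 h pp1 bh heq hu0.
rewrite -xl in l1.
have st := SA h1 b1 n1 x l1.
have [z [exz h1z]] := st c cx.
have zy : z != y.
  apply/eqP => E; subst z; case: b1 => hcol _ _.
  by move: (hcol y c h1z); rewrite (negbTE cy).
have zx : z != x by apply/eqP => E; subst z; rewrite e_irr in exz.
have [b2 n2] := swap_ok h1 x z c b1 st l1 exz h1z.
set h2 := fun t => h1 (tperm x z t) in b2 n2.
have h2x : h2 x = Some c by rewrite /h2 tpermL.
have h2z : h2 z = None by rewrite /h2 tpermR.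
have yx : y != x by apply/eqP => E; subst y; rewrite e_irr in exy.
have cz : connect (del_vertex e x) z y.
  case: (boolP (connect (del_vertex e x) z y)) => // nc; exfalso.
  by apply: (G_nocut x); exists z, y; split.
have /connectP [p2 pp2 yl] := cz.
have sub : forall a b, del_vertex e x a b -> e a b by move=> a b /and3P [].
have [h3 [b3 n3 l3 r3]] := walk (del_vertex e x) sub n.+1 SA p2 z h2 pp2 b2
  (etrans n2 n1) h2z.
rewrite -yl in l3.
have h3x : h3 x = Some c by rewrite r3 // notin_path.
have st3 := SA h3 b3 n3 y l3.
apply: (img_minus h3 y x); first by rewrite inE e_sym.
apply/subsetP => o /imsetP [d dL ->].
have [w [ew hw]] := st3 d dL.
apply/imsetP; exists w; last by rewrite hw.
rewrite !inE ew andbT; apply/eqP => E; subst w.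
by move: hw; rewrite h3x => -[E]; subst d; rewrite dL in cy.
Qed.

End Proof.

Theorem lemma4p3 (T C : finType) (e : rel T)
  (e_sym : symmetric e) (e_irr : irreflexive e)
  (G_conn : connected_graph e)
  (G_nocut : forall x : T, ~ cut_vertex e x)
  (L : T -> {set C}) (L_deg : degree_list_assignment e L)
  (g : T -> option C) (g_col : partial_L_coloring L g)
  (g_proper : proper_partial_coloring e g) :
  ~ (exists f : T -> C, [/\ L_coloring L f, proper_coloring e f &
        forall a : C, pfiber g a <= fiber f a]) ->
  forall x y : T, L x = L y.
Proof.
move=> NF x y.
case: (boolP [forall a, forall b, e a b ==> (L a == L b)]) => H.
  have /connectP [p pp ->] := G_conn x y.
  elim: p x pp => //= w p IH a /andP [eaw pp].
  move/forallP: H => /(_ a) /forallP /(_ w); rewrite eaw /= => /eqP ->.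
  exact: IH.
exfalso.
move/forallPn: H => [a] /forallPn [b]; rewrite negb_imply => /andP [eab nL].
have eba : e b a by rewrite e_sym.
case: (boolP (L a \subset L b)) => sab.
  have : ~~ (L b \subset L a).
    by apply/negP => sba; move: nL; rewrite eqEsubset sab sba.
  move/subsetPn => [c cb ca].
  exact: (core T C e e_sym e_irr L L_deg g NF G_conn G_nocut g_col g_proper b a c eba cb ca).
move/subsetPn: sab => [c ca cb].
exact: (core T C e e_sym e_irr L L_deg g NF G_conn G_nocut g_col g_proper a b c eab ca cb).
Qed.
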